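(* If $B^{(0)}(X,Y),\dots,B^{(\ell)}(X,Y)\in\mathbb F_q[X,Y]$ is a basis of the $\mathbb F_q[X]$-module $M_{s,\ell}$, then $B^{(0)},\dots,B^{(\ell)},\,Y^{\ell-s+1}(Y-R(X))^s$ is a basis of $M_{s,\ell+1}$.
   Context: Let $\mathbb F_q$ be a finite field and $n<q$. Let $\alpha_0,\dots,\alpha_{n-1}$ be distinct nonzero elements of $\mathbb F_q$, $w_0,\dots,w_{n-1}$ nonzero elements of $\mathbb F_q$, $r\in\mathbb F_q^n$, $r_i'=r_i/w_i$, and $R(X)$ the unique polynomial of degree less than $n$ with $R(\alpha_i)=r_i'$. For positive integers $s\le\ell$, $M_{s,\ell}$ is the $\mathbb F_q[X]$-module of all $Q\in\mathbb F_q[X,Y]$ of $Y$-degree at most $\ell$ such that for every $i$, $Q(X+\alpha_i,Y+r_i')$ has no monomials of total degree less than $s$. *)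

(* Defs.v *)
From HB Require Import structures.
From mathcomp Require Import all_boot all_order all_algebra all_field.
Set Implicit Arguments. Unset Strict Implicit. Unset Printing Implicit Defensive.
Import GRing.Theory.
Local Open Scope ring_scope.

(* Bivariate polynomials F[X,Y] are represented as {poly {poly F}}:
   the outer variable is Y, the coefficients are polynomials in X.
   So for Q : {poly {poly F}}, (Q`_j)`_i is the coefficient of X^i Y^j. *)

Definition shiftXY (F : fieldType) (a b : F) (Q : {poly {poly F}}) : {poly {poly F}} :=
  (map_poly (fun c : {poly F} => c \Po ('X + a%:P)) Q) \Po ('X + (b%:P)%:P).

Definition vanishes_to (F : fieldType) (s : nat) (a b : F) (Q : {poly {poly F}}) : Prop :=
  forall i j : nat, (i + j < s)%N -> ((shiftXY a b Q)`_j)`_i = 0.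

Definition inM (F : fieldType) (n s l : nat) (alpha r' : 'I_n -> F)
    (Q : {poly {poly F}}) : Prop :=
  (size Q <= l.+1)%N /\ forall i : 'I_n, vanishes_to s (alpha i) (r' i) Q.

Definition lincomb (F : fieldType) (c bs : seq {poly {poly F}}) : {poly {poly F}} :=
  \sum_(k < size bs) c`_k * bs`_k.

Definition is_Fx_basis (F : fieldType) (M : {poly {poly F}} -> Prop)
    (bs : seq {poly {poly F}}) : Prop :=
  [/\ (forall k, (k < size bs)%N -> M bs`_k),
      (forall c : seq {poly F}, size c = size bs ->
          lincomb (map polyC c) bs = 0 -> forall k, c`_k = 0) &
      (forall Q, M Q -> exists c : seq {poly F},
          size c = size bs /\ Q = lincomb (map polyC c) bs)].

(* Main.v *)
Require Import Defs.
From HB Require Import structures.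
From mathcomp Require Import all_boot all_order all_algebra all_field.
From mathcomp Require Import zify.
Import GRing.Theory.
Local Open Scope ring_scope.

Section S.
Variable F : fieldType.
Implicit Types P Q : {poly {poly F}}.

Definition vz s P := forall i j : nat, (i + j < s)%N -> (P`_j)`_i = 0.

Lemma vz0 P : vz 0 P. Proof. by []. Qed.

Lemma vzD s P Q : vz s P -> vz s Q -> vz s (P + Q).
Proof. by move=> hP hQ i j h; rewrite coefD coefD hP // hQ // addr0. Qed.

Lemma vzN s P : vz s P -> vz s (- P).
Proof. by move=> hP i j h; rewrite coefN coefN hP // oppr0. Qed.

Lemma vzM s t P Q : vz s P -> vz t Q -> vz (s + t) (P * Q).
Proof.
move=> hP hQ i j h; rewrite coefM coef_sum big1 // => k _.
rewrite coefM big1 // => m _.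
have hk := ltn_ord k; have hm := ltn_ord m.
case: (ltnP (m + k) s) => hs; first by rewrite hP // mul0r.
rewrite hQ ?mulr0 //; lia.
Qed.

Lemma vzX s P : vz 1 P -> vz s (P ^+ s).
Proof.
move=> h; elim: s => [|s IH]; first exact: vz0.
by rewrite exprS -add1n; apply: vzM.
Qed.

Lemma shiftXY_D a b P Q : shiftXY a b (P + Q) = shiftXY a b P + shiftXY a b Q.
Proof.
rewrite /shiftXY.
have -> : (fun c : {poly F} => c \Po ('X + a%:P)) = comp_poly ('X + a%:P) by [].
by rewrite rmorphD comp_polyD.
Qed.

Lemma shiftXY_M a b P Q : shiftXY a b (P * Q) = shiftXY a b P * shiftXY a b Q.
Proof.
rewrite /shiftXY.
have -> : (fun c : {poly F} => c \Po ('X + a%:P)) = comp_poly ('X + a%:P) by [].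
by rewrite rmorphM comp_polyM.
Qed.

Lemma shiftXY_N a b P : shiftXY a b (- P) = - shiftXY a b P.
Proof.
rewrite /shiftXY.
have -> : (fun c : {poly F} => c \Po ('X + a%:P)) = comp_poly ('X + a%:P) by [].
by rewrite rmorphN -sub0r comp_polyB comp_poly0 sub0r.
Qed.

Lemma shiftXY_X (a b : F) : shiftXY a b 'X = 'X + (b%:P)%:P.
Proof. by rewrite /shiftXY map_polyX comp_polyX. Qed.

Lemma shiftXY_C (a b : F) (p : {poly F}) : shiftXY a b p%:P = (p \Po ('X + a%:P))%:P.
Proof. by rewrite /shiftXY map_polyC comp_polyC. Qed.

Lemma vz_line a b (R : {poly F}) : R.[a] = b -> vz 1 (shiftXY a b ('X - R%:P)).
Proof.
move=> hR i j h; have [-> ->] : i = 0%N /\ j = 0%N by lia.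
rewrite shiftXY_D shiftXY_N shiftXY_X shiftXY_C.
rewrite !(coefD, coefN, coefX, coefC) /= add0r.
by rewrite -horner_coef0 horner_comp !hornerE hR subrr.
Qed.

Lemma shiftXY_X_exp (a b : F) P k : shiftXY a b (P ^+ k) = shiftXY a b P ^+ k.
Proof.
elim: k => [|k IH]; first by rewrite !expr0 /shiftXY map_polyC comp_polyC /= comp_polyC.
by rewrite !exprS shiftXY_M IH.
Qed.

Lemma lincomb_rcons (cs bs : seq {poly {poly F}}) x y :
  size cs = size bs -> lincomb (rcons cs x) (rcons bs y) = lincomb cs bs + x * y.
Proof.
move=> hs; rewrite /lincomb size_rcons big_ord_recr /=.
rewrite !nth_rcons hs ltnn eqxx; congr (_ + _).
by apply: eq_bigr => i _; rewrite !nth_rcons hs ltn_ord.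
Qed.

Lemma lincomb_coef (cs bs : seq {poly {poly F}}) m :
  (forall k, (k < size bs)%N -> (size (nth 0%R bs k) <= m)%N) ->
  (forall k, exists p, cs`_k = p%:P) ->
  (lincomb cs bs)`_m = 0.
Proof.
move=> hb hc; rewrite /lincomb coef_sum big1 // => i _.
have [p ->] := hc i; rewrite coefCM nth_default ?mulr0 //; exact: hb.
Qed.
End S.

Theorem lemma7 (F : finFieldType) (n : nat) (hn : (n < #|F|)%N)
  (alpha : 'I_n -> F) (halpha_inj : injective alpha)
  (halpha_nz : forall i, alpha i != 0)
  (w : 'I_n -> F) (hw : forall i, w i != 0)
  (r : 'I_n -> F) (R : {poly F})
  (hR_size : (size R <= n)%N)
  (hR_interp : forall i, R.[alpha i] = r i / w i)
  (s l : nat) (hs : (0 < s)%N) (hsl : (s <= l)%N)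
  (B : seq {poly {poly F}}) (hB_size : size B = l.+1) :
  is_Fx_basis (inM s l alpha (fun i => r i / w i)) B ->
  is_Fx_basis (inM s l.+1 alpha (fun i => r i / w i))
    (rcons B ('X ^+ (l - s + 1) * ('X - R%:P) ^+ s)).
Proof.
set G := _ * _.
have Gmon : G \is monic by rewrite monicMl ?monicXn // monic_exp // monicXsubC.
have Gsz : size G = l.+2.
  rewrite /G size_Mmonic ?monic_neq0 ?monicXn // ?monic_exp ?monicXsubC //.
  rewrite size_polyXn size_exp_XsubC; lia.
have Gl : G`_l.+1 = 1.
  by have := Gmon; rewrite monicE lead_coefE Gsz => /eqP.
have Gv : forall i, vanishes_to s (alpha i) (r i / w i) G.
  move=> i; rewrite /vanishes_to /G shiftXY_M shiftXY_X_exp -[s]add0n.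
  apply: vzM; first exact: vz0.
  rewrite shiftXY_X_exp; apply: vzX; exact: vz_line.
move=> [hmem hind hspan]; split.
- move=> k; rewrite size_rcons ltnS leq_eqVlt => hk; rewrite nth_rcons.
  case: ifP => hkB.
    have [hsz hv] := hmem k hkB; split => //; exact: leq_trans hsz _.
  rewrite (eqP (_ : k == size B)); last by case/orP: hk => // ; rewrite hkB.
  by rewrite eqxx; split => //; rewrite Gsz.
- move=> c; case/lastP: c => [|c q]; first by rewrite size_rcons.
  rewrite !size_rcons => /eqP; rewrite eqSS => /eqP hc.
  rewrite map_rcons lincomb_rcons ?size_map //.
  move=> h0.
  have hq : q = 0.
    have := congr1 (fun P : {poly {poly F}} => P`_l.+1) h0; rewrite /= coef0 coefD coefCM Gl mulr1.
    rewrite lincomb_coef ?add0r.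
    + by [].
    + by move=> k hk; have [] := hmem k hk.
    + move=> k; case: (ltnP k (size c)) => hk.
        by exists c`_k; rewrite (nth_map 0).
      by exists 0; rewrite nth_default ?size_map.
  rewrite hq mul0r addr0 in h0.
  move=> k; rewrite nth_rcons; case: ifP => hk; first exact: (hind c hc h0 k).
  by case: ifP.
- move=> Q [hsz hv].
  set q := Q`_l.+1.
  have hQ' : inM s l alpha (fun i => r i / w i) (Q - q%:P * G).
    split.
      apply/leq_sizeP => j; rewrite leq_eqVlt => /orP [/eqP <-|hj].
        by rewrite coefB coefCM Gl mulr1 subrr.
      rewrite coefB coefCM.
      move/leq_sizeP: hsz => -> //; rewrite (leq_sizeP _ _ (eq_leq Gsz)) //.
      by rewrite mulr0 subrr.
    move=> i; rewrite /vanishes_to shiftXY_D shiftXY_N shiftXY_M.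
    apply: vzD; first exact: hv.
    apply: vzN; rewrite -[s]add0n; apply: vzM; first exact: vz0.
    exact: Gv.
  have [c [hc hQc]] := hspan _ hQ'.
  exists (rcons c q); split; first by rewrite !size_rcons hc.
  rewrite map_rcons lincomb_rcons ?size_map // -hQc.
  by rewrite subrK.
Qed.
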